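(* Let $q$ be odd, $\alpha,\beta\in\mathbb{F}_{q^2}$ with $\alpha\ne0$ and $(\beta^q-\beta)^2+4\alpha^{q+1}$ a nonsquare in $\mathbb{F}_q$, and let $R_1=(0,\epsilon,1)$. Then (1) $\mathrm{pedal}(R_1)$ consists exactly of the points $Q_x=(x,\,2\alpha x^2+(\beta-\beta^q)x^{q+1}+\epsilon,\,1)$ with $x\in\mathbb{F}_{q^2}$ satisfying $\alpha x^2-\alpha^q x^{2q}+(\beta-\beta^q)x^{q+1}+2\epsilon=0$; (2) the points of $\mathrm{pedal}(R_1)$ lie on the lines of the Baer pencil joining the vertex $U_\infty=(1,0,0)$ to the Baer subline $\{E_{s-\epsilon}=(0,s-\epsilon,1): s\in\mathbb{F}_q\}\cup\{(0,1,0)\}$.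
   Context: Points of $\mathrm{PG}(2,q^2)$ have homogeneous coordinates $(x,y,z)$. $\zeta$ is a primitive element of $\mathbb{F}_{q^2}$ and $\epsilon=\zeta^{(q+1)/2}$ (so $\epsilon^q=-\epsilon$ and $\epsilon^2$ is a primitive element of $\mathbb{F}_q$). $\mathcal U_{\alpha\beta}=\{(x,\alpha x^2+\beta x^{q+1}+r,1): x\in\mathbb{F}_{q^2}, r\in\mathbb{F}_q\}\cup\{(0,1,0)\}$, which under the hypotheses is a unital (a set of $q^3+1$ points meeting every line in $1$ or $q+1$ points). For a point $P$ not on the unital, $\mathrm{pedal}(P)$ is the set of points of contact of the $q+1$ tangent lines (lines meeting the unital in exactly one point) through $P$. A Baer pencil is the set of $q+1$ lines joining a vertex point to the $q+1$ points of a Baer subline (a set of points of a line projectively equivalent to $\mathrm{PG}(1,q)$). *)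

(* Defs.v *)
From HB Require Import structures.
From mathcomp Require Import all_boot all_order all_algebra all_field.
Set Implicit Arguments. Unset Strict Implicit. Unset Printing Implicit Defensive.
Import GRing.Theory.
Local Open Scope ring_scope.

Section PG2.
Variable F : fieldType.

Definition pt := (F * F * F)%type.
Definition mkpt (x y z : F) : pt := (x, y, z).
Definition px (P : pt) : F := P.1.1.
Definition py (P : pt) : F := P.1.2.
Definition pz (P : pt) : F := P.2.

Definition proj_eq (P Q : pt) : Prop :=
  exists2 k : F, k != 0 & P = mkpt (k * px Q) (k * py Q) (k * pz Q).

Definition incident (l P : pt) : Prop :=
  px l * px P + py l * py P + pz l * pz P = 0.

Definition is_line (l : pt) : Prop := l != (0, 0, 0).

Variables (q : nat) (alpha beta : F).

Definition in_Fq (r : F) : Prop := r ^+ q = r.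

Definition on_unital (P : pt) : Prop :=
  (exists x r, in_Fq r /\
      proj_eq P (mkpt x (alpha * x ^+ 2 + beta * x ^+ q.+1 + r) 1))
  \/ proj_eq P (mkpt 0 1 0).

Definition tangent_line (l : pt) : Prop :=
  is_line l /\
  exists P, [/\ on_unital P, incident l P &
                forall Q, on_unital Q -> incident l Q -> proj_eq Q P].

Definition in_pedal (R P : pt) : Prop :=
  exists l, [/\ tangent_line l, incident l R, on_unital P & incident l P].

Definition collinear (P A B : pt) : Prop :=
  exists l, [/\ is_line l, incident l P, incident l A & incident l B].

End PG2.

(* Main.v *)
Require Import Defs.
From HB Require Import structures.
From mathcomp Require Import all_boot all_order all_algebra all_field all_fingroup all_solvable.
From mathcomp Require Import ring zify.
Import GRing.Theory.
Local Open Scope ring_scope.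

Lemma fr_setup (F : finFieldType) (q : nat) : odd q -> #|F| = (q ^ 2)%N ->
  [/\ forall x y : F, (x + y) ^+ q = x ^+ q + y ^+ q,
      forall x : F, (x ^+ q) ^+ q = x & 2%:R != 0 :> F].
Proof.
move=> oq cF.
have [p pp chp] := finPcharP F.
have pF : p.-nat #|F|.
  by have := abelem_pgroup (fin_ring_pchar_abelem chp); rewrite /pgroup cardsT.
have pq : p.-nat q by apply: pnat_dvd pF; rewrite cF expnS dvdn_mulr.
split.
- move=> x y; apply: exprDn_pchar; by rewrite (eq_pnat _ (pcharf_eq chp)).
- by move=> x; rewrite -exprM mulnn -cF expf_card.
- rewrite -(dvdn_pcharf chp); apply/negP => p2.
  idtac.
  have p2' : p = 2%N by apply/eqP; rewrite -dvdn_prime2 // ?pdiv_prime.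
  move: pq; rewrite p2' => /p_natP [k qk].
  move: oq cF; rewrite qk oddX; case: k {qk} => [_|k].
    by move=> cF; have := finNzRing_gt1 F; rewrite cF.
  by rewrite orbF.
Qed.
Lemma eps_setup (F : finFieldType) (q : nat) (zeta : F) : odd q -> #|F| = (q ^ 2)%N ->
  (forall y : F, y != 0 -> exists k : nat, zeta ^+ k = y) -> 2%:R != 0 :> F ->
  zeta ^+ (q.+1 %/ 2) != 0 /\ (zeta ^+ (q.+1 %/ 2)) ^+ q = - zeta ^+ (q.+1 %/ 2).
Proof.
move=> oq cF gen two.
have [j qj] : exists j, q = j.*2.+1 by exists q./2; rewrite -{1}(odd_double_half q) oq.
have -> : (q.+1 %/ 2 = j.+1)%N by rewrite qj; lia.
have z0 : zeta != 0.
  apply/negP => /eqP z0; have [k] := gen (-1) ltac:(by rewrite oppr_eq0 oner_eq0).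
  rewrite z0; case: k => [|k]; last by rewrite expr0n /= => /eqP; rewrite eq_sym oppr_eq0 oner_eq0.
  by rewrite expr0 => e; move: two; rewrite -[2%:R]/(1 + 1 : F) {1}e addNr eqxx.
set m := (j.+1 * j.*2)%N.
have cF' : #|F| = (m.*2).+1 by rewrite cF qj /m; lia.
have m0 : (0 < m)%N by have := finNzRing_gt1 F; rewrite cF'; lia.
have zn : zeta ^+ m ^+ 2 = 1.
  have ez := expf_card zeta; rewrite cF' exprS -muln2 exprM in ez.
  apply/eqP; rewrite -(inj_eq (mulfI z0)) mulr1 ez //.
have zm : zeta ^+ m = -1.
  have : (zeta ^+ m - 1) * (zeta ^+ m + 1) = 0 by rewrite -subr_sqr zn expr1n subrr.
  move/eqP; rewrite mulf_eq0 subr_eq0 addr_eq0 => /orP [/eqP z1|/eqP //].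
  exfalso.
  have sub : [set x : F | x != 0] \subset [set zeta ^+ (val i) | i : 'I_m].
    apply/subsetP => y; rewrite inE => /gen [k <-].
    apply/imsetP.
    exists (Ordinal (ltn_pmod k m0)) => //=.
    by rewrite {1}(divn_eq k m) exprD mulnC exprM z1 expr1n mul1r.
  have := leq_trans (subset_leq_card sub) (leq_imset_card _ _); rewrite card_ord.
  have : #|[set x : F | x != 0]| = #|F|.-1.
    by rewrite -(cardC1 0); apply: eq_card => x; rewrite inE.
  move=> ->; rewrite cF' /=; lia.
split; first by rewrite expf_neq0.
rewrite -exprM (_ : (j.+1 * q = m + j.+1)%N); first by rewrite exprD zm mulN1r.
rewrite qj /m; lia.
Qed.
Section Geo.
Variables (F : fieldType) (q : nat) (alpha beta eps : F).
Hypothesis frDq : forall x y : F, (x + y) ^+ q = x ^+ q + y ^+ q.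
Hypothesis frKq : forall x : F, (x ^+ q) ^+ q = x.
Hypothesis two_nz : 2%:R != 0 :> F.
Hypothesis eps_nz : eps != 0.
Hypothesis eps_q : eps ^+ q = - eps.
Hypothesis alpha_nz : alpha != 0.
Hypothesis nonsq : ~ (exists y : F, in_Fq q y /\
        y ^+ 2 = (beta ^+ q - beta) ^+ 2 + 4%:R * alpha ^+ q.+1).

Definition fr : F -> F := locked (fun x => x ^+ q).
Lemma frE x : x ^+ q = fr x. Proof. by rewrite /fr; unlock. Qed.
Lemma frD x y : fr (x + y) = fr x + fr y. Proof. by rewrite -!frE. Qed.
Lemma frK x : fr (fr x) = x. Proof. by rewrite -!frE. Qed.
Lemma fr0 : fr 0 = 0.
Proof. by apply: (addrI (fr 0)); rewrite -frD !addr0. Qed.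
Lemma frN x : fr (- x) = - fr x.
Proof. by apply: (addrI (fr x)); rewrite -frD !subrr fr0. Qed.
Lemma frB x y : fr (x - y) = fr x - fr y. Proof. by rewrite frD frN. Qed.
Lemma frM x y : fr (x * y) = fr x * fr y. Proof. by rewrite -!frE exprMn. Qed.
Lemma frX x n : fr (x ^+ n) = fr x ^+ n. Proof. by rewrite -!frE exprAC. Qed.
Lemma frV x : fr (x^-1) = (fr x)^-1. Proof. by rewrite -!frE exprVn. Qed.
Lemma fr1 : fr 1 = 1. Proof. by rewrite -frE expr1n. Qed.
Lemma fr_nat n : fr n%:R = n%:R.
Proof. by elim: n => [|n IH]; rewrite ?fr0 // -addn1 natrD frD IH fr1. Qed.
Lemma fr_eq0 x : (fr x == 0) = (x == 0).
Proof.
have q0 : (0 < q)%N.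
  by move: frKq; case: q => // /(_ 0); rewrite !expr0 => /eqP; rewrite oner_eq0.
by rewrite -frE expf_eq0 q0.
Qed.

Definition frS := (frD, frB, frN, frM, frX, frV, frK, fr1, fr0, fr_nat).

Let b := beta - fr beta.
Definition Qf t := alpha * t ^+ 2 - fr alpha * (fr t) ^+ 2 + b * (t * fr t).

Lemma K t : Qf t = 0 -> t = 0.
Proof.
rewrite /Qf => H; apply/eqP; apply: contraT => t0.
have T0 : fr t != 0 by rewrite fr_eq0.
set T := fr t in H T0; set A' := fr alpha in H.
have HA : A' = (alpha * t ^+ 2 + b * (t * T)) / T ^+ 2.
  apply/(mulIf (expf_neq0 2 T0)); rewrite divfK ?expf_neq0 //.
  transitivity (A' * T ^+ 2 + (alpha * t ^+ 2 - A' * T ^+ 2 + b * (t * T))).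
    by rewrite H addr0.
  ring.
case: nonsq; exists ((alpha * t ^+ 2 + A' * T ^+ 2) / (t * T)); split.
  rewrite /in_Fq frE !frS /T /A' ?frK.
  by rewrite addrC [fr t * t]mulrC.
rewrite [alpha ^+ q.+1]exprS !frE -/A' HA /b -/T.
field; by rewrite T0 t0.
Qed.

Definition U0 x y := fr (y - alpha * x ^+ 2 - beta * (x * fr x)) = y - alpha * x ^+ 2 - beta * (x * fr x).

Lemma line_U0 x0 y0 m t : U0 x0 y0 ->
  (U0 (x0 + t) (y0 + m * t) <->
   (m - 2%:R * alpha * x0 - b * fr x0) * t
   - fr (m - 2%:R * alpha * x0 - b * fr x0) * fr t - Qf t = 0).
Proof.
rewrite /U0 => H0.
set R0 := y0 - _ - _ in H0 *.
set D := m * t - 2%:R * alpha * x0 * t - alpha * t ^+ 2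
         - beta * (x0 * fr t + t * fr x0 + t * fr t).
have -> : y0 + m * t - alpha * (x0 + t) ^+ 2 - beta * ((x0 + t) * fr (x0 + t)) = R0 + D.
  by rewrite frD /R0 /D; ring.
have -> : (m - 2%:R * alpha * x0 - b * fr x0) * t
   - fr (m - 2%:R * alpha * x0 - b * fr x0) * fr t - Qf t = D - fr D.
  by rewrite /D /Qf /b !frS; ring.
rewrite frD H0; split => [/addrI -> |/eqP]; first by rewrite subrr.
by rewrite subr_eq0 => /eqP <-.
Qed.

Lemma peq_refl (P : pt F) : proj_eq P P.
Proof. by exists 1; rewrite ?oner_eq0 //; case: P => [[a b'] c]; rewrite /mkpt !mul1r. Qed.

Lemma peq_sym (P Q : pt F) : proj_eq P Q -> proj_eq Q P.
Proof.
case: P Q => [[a1 b1] c1] [[a2 b2] c2] [k k0 [-> -> ->]].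
exists k^-1; first by rewrite invr_eq0.
by rewrite /mkpt /px /py /pz /= !mulrA !mulVf // !mul1r.
Qed.

Arguments peq_sym {P Q}.
Lemma peq_trans (P Q R : pt F) : proj_eq P Q -> proj_eq Q R -> proj_eq P R.
Proof.
case: P Q R => [[a1 b1] c1] [[a2 b2] c2] [[a3 b3] c3] [k k0 [-> -> ->]] [k' k0' [-> -> ->]].
exists (k * k'); first by rewrite mulf_neq0.
by rewrite /mkpt /px /py /pz /= !mulrA.
Qed.

Arguments peq_trans {P Q R}.
Lemma inc_peq (l P Q : pt F) : proj_eq P Q -> incident l P -> incident l Q.
Proof.
case: P Q => [[a1 b1] c1] [[a2 b2] c2] [k k0 [-> -> ->]].
rewrite /incident /px /py /pz /= => h.
have : k * (l.1.1 * a2 + l.1.2 * b2 + l.2 * c2) = 0 by rewrite -h; ring.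
by move/eqP; rewrite mulf_eq0 (negbTE k0) /= => /eqP.
Qed.

Arguments inc_peq {l P Q}.
Lemma peq_aff (x y x' y' : F) : proj_eq (mkpt x y 1) (mkpt x' y' 1) -> x = x' /\ y = y'.
Proof.
case=> k k0 [-> -> e]; rewrite /pz /= mulr1 in e.
by rewrite /px /py /= -e !mul1r.
Qed.

Lemma peq_aff_inf (x y : F) : ~ proj_eq (mkpt x y 1) (mkpt 0 1 0).
Proof.
case=> k k0 [_ _ /eqP]; rewrite /pz /= mulr0 oner_eq0 //.
Qed.

Arguments peq_aff {x y x' y'}.
Arguments peq_aff_inf {x y}.
Lemma onU (P : pt F) : on_unital q alpha beta P <->
  proj_eq P (mkpt 0 1 0) \/ exists x y, U0 x y /\ proj_eq P (mkpt x y 1).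
Proof.
split.
  case=> [[x [r [Hr Hp]]]|H]; last by left.
  right; exists x, (alpha * x ^+ 2 + beta * x ^+ q.+1 + r); split => //.
  rewrite /U0.
  have -> : alpha * x ^+ 2 + beta * x ^+ q.+1 + r - alpha * x ^+ 2 - beta * (x * fr x) = r.
    by rewrite [x ^+ q.+1]exprS frE; ring.
  by rewrite -frE.
case=> [H|[x [y [HU Hp]]]]; first by right.
left; exists x, (y - alpha * x ^+ 2 - beta * (x * fr x)); split.
  by rewrite /in_Fq frE.
have -> : alpha * x ^+ 2 + beta * x ^+ q.+1 + (y - alpha * x ^+ 2 - beta * (x * fr x)) = y.
  by rewrite [x ^+ q.+1]exprS frE; ring.
exact: Hp.
Qed.

Definition Ef x := alpha * x ^+ 2 - fr alpha * (fr x) ^+ 2 + b * (x * fr x) + 2%:R * eps.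
Definition Qx x := mkpt x (2%:R * alpha * x ^+ 2 + b * (x * fr x) + eps) 1.

Lemma epsq : fr eps = - eps. Proof. by rewrite -frE. Qed.

Lemma U0_Ef x : U0 x (2%:R * alpha * x ^+ 2 + b * (x * fr x) + eps) <-> Ef x = 0.
Proof.
rewrite /U0; set R := (X in fr X = _).
have e : Ef x = R - fr R by rewrite /R /Ef /b !frS epsq; ring.
rewrite e; split => [->|]; first by rewrite subrr.
by move/eqP; rewrite subr_eq0 => /eqP <-.
Qed.

Lemma pedal_bwd (P : pt F) x : Ef x = 0 -> proj_eq P (Qx x) ->
  in_pedal q alpha beta (mkpt 0 eps 1) P.
Proof.
move=> HE Hp.
set m := 2%:R * alpha * x + b * fr x.
set y0 := 2%:R * alpha * x ^+ 2 + b * (x * fr x) + eps.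
have HU : U0 x y0 by apply/U0_Ef.
have HPU : on_unital q alpha beta P by apply/onU; right; exists x, y0.
have HiQ : incident (mkpt m (-1) eps) (Qx x).
  by rewrite /incident /Qx /px /py /pz /= /m; ring.
exists (mkpt m (-1) eps); split => //.
- split.
    by apply/eqP => -[_ /eqP]; rewrite oppr_eq0 oner_eq0.
  exists (Qx x); split => //; first by apply/onU; right; exists x, y0; split => //; apply: peq_refl.
  move=> Q /onU [Qinf|[x1 [y1 [HU1 Hq]]]] HiQ1.
    have := inc_peq Qinf HiQ1; rewrite /incident /px /py /pz /= => /eqP.
    by rewrite mulr0 mulr1 mulr0 addr0 add0r oppr_eq0 oner_eq0.
  have Hi1 := inc_peq Hq HiQ1; rewrite /incident /px /py /pz /= in Hi1.
  set t := x1 - x.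
  have x1E : x1 = x + t by rewrite /t; ring.
  have y1E : y1 = y0 + m * t.
    by apply/eqP; rewrite -subr_eq0 -oppr_eq0 -(eqP (introT eqP Hi1)) /y0 /m /t; apply/eqP; ring.
  rewrite x1E y1E in HU1.
  have := (line_U0 _ _ _ _ HU).1 HU1.
  have -> : m - 2%:R * alpha * x - b * fr x = 0 by rewrite /m; ring.
  rewrite fr0 !mul0r subrr sub0r => /eqP; rewrite oppr_eq0 => /eqP /K t0.
  rewrite x1E y1E t0 addr0 mulr0 addr0 in Hq.
  exact: Hq.
- by rewrite /incident /px /py /pz /=; ring.
- exact: inc_peq (peq_sym Hp) HiQ.
Qed.

Lemma U00 : U0 0 0.
Proof. by rewrite /U0 fr0 expr0n /= !mulr0 !subr0 fr0. Qed.

Lemma pedal_fwd (P : pt F) : in_pedal q alpha beta (mkpt 0 eps 1) P ->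
  exists x, Ef x = 0 /\ proj_eq P (Qx x).
Proof.
case=> -[[la lb] lc] [[Hline [P0 [HP0 HiP0 Huniq]]] HiR HP HiP].
rewrite /incident /px /py /pz /= in HiR.
have lb0 : lb != 0.
  apply/negP => /eqP lb0.
  have lc0 : lc = 0 by move: HiR; rewrite lb0; rewrite mulr0 mul0r !add0r mulr1.
  have h1 : proj_eq (mkpt 0 0 1) P0.
    apply: Huniq; first by apply/onU; right; exists 0, 0; split; [exact: U00 | exact: peq_refl].
    by rewrite /incident /px /py /pz /= lb0 lc0; ring.
  have h2 : proj_eq (mkpt 0 1 0) P0.
    apply: Huniq; first by right; apply: peq_refl.
    by rewrite /incident /px /py /pz /= lb0 lc0; ring.
  exact: (peq_aff_inf (peq_trans h1 (peq_sym h2))).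
case/onU: HP => [Pinf|[x0 [y0 [HU Hp]]]].
  have := inc_peq Pinf HiP; rewrite /incident /px /py /pz /= => e.
  have lbz : lb = 0 by rewrite -e; ring.
  by rewrite lbz eqxx in lb0.
have Hi0 := inc_peq Hp HiP; rewrite /incident /px /py /pz /= in Hi0.
set m := - la / lb.
have y0E : y0 = m * x0 + eps.
  have lcE : lc = - (lb * eps) by apply/eqP; rewrite -subr_eq0; apply/eqP; rewrite -HiR; ring.
  have e1 : lb * y0 = - la * x0 - lc.
    by apply/eqP; rewrite -subr_eq0; apply/eqP; rewrite -Hi0; ring.
  apply: (mulfI lb0); rewrite e1 lcE /m; field; exact: lb0.
set d := m - 2%:R * alpha * x0 - b * fr x0.
have d0 : d = 0.
  apply/eqP; apply: contraT => dn0.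
  have fd0 : fr d != 0 by rewrite fr_eq0.
  set u := eps / d.
  have u0 : u != 0 by rewrite mulf_neq0 ?invr_eq0.
  set Qu := Qf u.
  have Qu0 : Qu != 0 by apply/negP => /eqP /K /eqP; rewrite (negbTE u0).
  set s := 2%:R * eps / Qu.
  have s0 : s != 0 by rewrite !mulf_neq0 ?invr_eq0.
  set t := s * u.
  have frQ : fr Qu = - Qu by rewrite /Qu /Qf /b !frS; ring.
  have frs : fr s = s.
    rewrite /s frM frV frQ frM fr_nat epsq; field; by rewrite oppr_eq0 Qu0.
  have Qt : Qf t = s ^+ 2 * Qu by rewrite /Qu /Qf /t frM frs; ring.
  have Ut : U0 (x0 + t) (y0 + m * t).
    apply/(line_U0 _ _ _ _ HU); rewrite -/d Qt /t frM frs /u frM frV epsq /s.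
    by field; rewrite Qu0 fd0 dn0.
  have Hit : incident (mkpt la lb lc) (mkpt (x0 + t) (y0 + m * t) 1).
    rewrite /incident /px /py /pz /=.
    transitivity ((la * x0 + lb * y0 + lc * 1) + t * (la + lb * m)); first by ring.
    by rewrite Hi0 /m; field.
  have h1 := Huniq _ (proj2 (onU _) (or_intror (ex_intro _ _ (ex_intro _ _ (conj Ut (peq_refl _)))))) Hit.
  have h2 := Huniq _ (proj2 (onU _) (or_intror (ex_intro _ _ (ex_intro _ _ (conj HU Hp))))) HiP.
  have [e _] := peq_aff (peq_trans h1 (peq_trans (peq_sym h2) Hp)).
  have : t = 0 by apply: (addrI x0); rewrite addr0.
  by move/eqP; rewrite mulf_eq0 (negbTE s0) (negbTE u0).
have mE : m = 2%:R * alpha * x0 + b * fr x0.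
  by apply/eqP; rewrite -subr_eq0; apply/eqP; rewrite -d0 /d; ring.
have y0E' : y0 = 2%:R * alpha * x0 ^+ 2 + b * (x0 * fr x0) + eps by rewrite y0E mE; ring.
exists x0; split; first by apply/U0_Ef; rewrite -y0E'.
by rewrite /Qx -y0E'.
Qed.

Lemma pencil (P : pt F) x : Ef x = 0 -> proj_eq P (Qx x) ->
  exists s, in_Fq q s /\ collinear P (mkpt 1 0 0) (mkpt 0 (s - eps) 1).
Proof.
move=> HE Hp.
set y0 := 2%:R * alpha * x ^+ 2 + b * (x * fr x) + eps.
exists (y0 + eps); split.
  rewrite /in_Fq frE; apply/eqP; rewrite -subr_eq0.
  have -> : fr (y0 + eps) - (y0 + eps) = - 2%:R * Ef x by rewrite /y0 /Ef /b !frS epsq; ring.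
  by rewrite HE mulr0.
exists (mkpt 0 1 (- y0)); split.
- by apply/eqP => /(congr1 (fun p : pt F => p.1.2)) /eqP; rewrite oner_eq0.
- apply: inc_peq (peq_sym Hp) _; rewrite /incident /Qx /px /py /pz /= -/y0; ring.
- by rewrite /incident /px /py /pz /=; ring.
- by rewrite /incident /px /py /pz /=; ring.
Qed.
End Geo.

Lemma EfE (F : fieldType) q (alpha beta eps x : F) :
  Ef F q alpha beta eps x = alpha * x ^+ 2 - alpha ^+ q * x ^+ (2 * q)
     + (beta - beta ^+ q) * x ^+ q.+1 + 2%:R * eps.
Proof. by rewrite /Ef /fr; unlock; rewrite mulnC exprM [x ^+ q.+1]exprS exprAC. Qed.

Lemma QxE (F : fieldType) q (alpha beta eps x : F) :
  Qx F q alpha beta eps x =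
  mkpt x (2%:R * alpha * x ^+ 2 + (beta - beta ^+ q) * x ^+ q.+1 + eps) 1.
Proof. by rewrite /Qx /fr; unlock; rewrite [x ^+ q.+1]exprS. Qed.

Theorem lemma2p2 (F : finFieldType) (q : nat) (zeta alpha beta : F) :
  odd q ->
  #|F| = (q ^ 2)%N ->
  (* zeta is a primitive element of F_{q^2} *)
  (forall y : F, y != 0 -> exists k : nat, zeta ^+ k = y) ->
  alpha != 0 ->
  (* (beta^q - beta)^2 + 4 alpha^(q+1) is a nonsquare in F_q *)
  ~ (exists y : F, in_Fq q y /\
        y ^+ 2 = (beta ^+ q - beta) ^+ 2 + 4%:R * alpha ^+ q.+1) ->
  let eps := zeta ^+ (q.+1 %/ 2) in
  let R1 := mkpt 0 eps 1 in
  (* (1) description of pedal(R1) *)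
  (forall P : pt F,
     in_pedal q alpha beta R1 P <->
     exists x : F,
       alpha * x ^+ 2 - alpha ^+ q * x ^+ (2 * q) + (beta - beta ^+ q) * x ^+ q.+1
         + 2%:R * eps = 0 /\
       proj_eq P (mkpt x (2%:R * alpha * x ^+ 2 + (beta - beta ^+ q) * x ^+ q.+1 + eps) 1))
  /\
  (* (2) pedal(R1) lies on the Baer pencil with vertex U_oo = (1,0,0) and base
     the Baer subline {(0, s - eps, 1) : s in F_q} u {(0,1,0)} *)
  (forall P : pt F,
     in_pedal q alpha beta R1 P ->
     (exists s : F, in_Fq q s /\ collinear P (mkpt 1 0 0) (mkpt 0 (s - eps) 1))
     \/ collinear P (mkpt 1 0 0) (mkpt 0 1 0)).
Proof.
move=> oq cF gen a0 nsq; cbv zeta.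
have [frD frK two] := fr_setup _ _ oq cF.
have [e0 eq] := eps_setup _ _ _ oq cF gen two.
split.
  move=> P; split.
    move/(@pedal_fwd _ _ _ _ _ frD frK two e0 eq nsq) => [x [h1 h2]].
    by exists x; rewrite -EfE -QxE.
  move=> [x [h1 h2]]; apply: (@pedal_bwd _ _ _ _ _ frD frK eq nsq P x).
    by rewrite EfE.
  by rewrite QxE.
move=> P /(@pedal_fwd _ _ _ _ _ frD frK two e0 eq nsq) [x [h1 h2]]; left.
exact: (@pencil _ _ _ _ _ frD frK eq P x h1 h2).
Qed.
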